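(* Let $n\ge 1$ and let $V,H$ be real $2n\times 2n$ symmetric positive-definite matrices with respective symplectic eigenvalues $\lambda_1^V\ge \lambda_2^V\ge\cdots\ge\lambda_n^V>0$ and $\lambda_1^H\ge\lambda_2^H\ge\cdots\ge\lambda_n^H>0$. Then \[ \inf_{S\in Sp(2n)} \operatorname{tr}(S V S^{T} H) \;=\; 2\sum_{i=1}^{n} \lambda_i^{H}\,\lambda_{n+1-i}^{V}. \]
   Context: Let $J=\begin{bmatrix}0 & \mathbb{I}_n\\ -\mathbb{I}_n & 0\end{bmatrix}$ and $Sp(2n)=\{S\in\mathbb{R}^{2n\times 2n}: S^T J S = J\}$ be the real symplectic group. By Williamson's theorem, for every real symmetric positive-definite $2n\times 2n$ matrix $M$ there is $S_M\in Sp(2n)$ with $S_M^T M S_M=\begin{bmatrix}\mathcal{D}_M & 0\\ 0&\mathcal{D}_M\end{bmatrix}$, where $\mathcal{D}_M=\operatorname{diag}(\lambda_1^M,\dots,\lambda_n^M)$, $\lambda_1^M\ge\cdots\ge\lambda_n^M>0$; these numbers $\lambda_i^M$ are the symplectic eigenvalues of $M$ (equivalently, $\pm i\lambda_i^M$ are the eigenvalues of $JM$). *)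

(* Defs.v *)
From HB Require Import structures.
From mathcomp Require Import all_boot all_order all_algebra.
From mathcomp Require Import all_classical all_reals.
Set Implicit Arguments. Unset Strict Implicit. Unset Printing Implicit Defensive.
Import Order.TTheory GRing.Theory Num.Theory.
Local Open Scope ring_scope.

Definition Jmx (R : realType) (n : nat) : 'M[R]_(n + n) :=
  block_mx 0 1%:M (- 1%:M) 0.

Definition symplectic (R : realType) (n : nat) (S : 'M[R]_(n + n)) : Prop :=
  S^T *m Jmx R n *m S = Jmx R n.

Definition sym_posdef (R : realType) (m : nat) (M : 'M[R]_m) : Prop :=
  M^T = M /\ forall x : 'cV[R]_m, x != 0 -> 0 < (x^T *m M *m x) 0 0.

(* d lists the symplectic eigenvalues of M in nonincreasing order,
   as given by Williamson's theorem: positive, nonincreasing, and some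
   symplectic S_M with S_M^T M S_M = diag(D, D), D = diag(d). *)
Definition symp_eigs (R : realType) (n : nat) (M : 'M[R]_(n + n))
    (d : 'I_n -> R) : Prop :=
  (forall i j : 'I_n, (i <= j)%N -> d j <= d i) /\
  (forall i, 0 < d i) /\
  exists S : 'M[R]_(n + n), symplectic S /\
    S^T *m M *m S = block_mx (diag_mx (\row_i d i)) 0 0 (diag_mx (\row_i d i)).

(* Main.v *)
Require Import Defs.
From HB Require Import structures.
From mathcomp Require Import all_boot all_order all_algebra.
From mathcomp Require Import all_classical all_reals.
From mathcomp Require Import ring lra zify.
Import Order.TTheory GRing.Theory Num.Theory.
Local Open Scope classical_set_scope.
Local Open Scope ring_scope.
Set Implicit Arguments. Unset Strict Implicit. Unset Printing Implicit Defensive.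

Section J.
Variables (R : realType) (n : nat).
Local Notation J := (Jmx R n).

Lemma trJ : J^T = - J.
Proof.
rewrite /Jmx tr_block_mx !trmx0 trmx1 raddfN /= trmx1.
by rewrite opp_block_mx !oppr0 opprK.
Qed.

Lemma JtJ : J^T *m J = 1%:M.
Proof.
rewrite trJ /Jmx opp_block_mx mulmx_block.
rewrite !oppr0 !mulmx0 ?mul0mx ?addr0 ?add0r ?mulmxN ?mulNmx ?mulmx1 ?opprK.
by rewrite -scalar_mx_block.
Qed.

Lemma JJt : J *m J^T = 1%:M.
Proof. by apply: mulmx1C; exact: JtJ. Qed.

Lemma symplecticM (A B : 'M[R]_(n + n)) :
  symplectic A -> symplectic B -> symplectic (A *m B).
Proof.
rewrite /symplectic => hA hB.
by rewrite trmx_mul !mulmxA -(mulmxA B^T) -(mulmxA B^T) hA.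
Qed.

Lemma symplecticJ : symplectic J.
Proof. by rewrite /symplectic JtJ mul1mx. Qed.

Lemma symplecticJt : symplectic J^T.
Proof. by rewrite /symplectic trmxK -mulmxA JJt mulmx1. Qed.

Lemma symplectic_tr (A : 'M[R]_(n + n)) : symplectic A -> symplectic A^T.
Proof.
rewrite /symplectic trmxK => hA.
have h1 : (J^T *m A^T *m J) *m A = 1%:M.
  by rewrite -!mulmxA (mulmxA A^T) hA JtJ.
have h2 := mulmx1C h1.
(* A J^T A^T J = 1 *)
have h3 : A *m J^T *m A^T = J^T.
  by rewrite -[LHS]mulmx1 -JJt !mulmxA -(mulmxA A) -(mulmxA A) h2 mul1mx.
by move: h3; rewrite trJ mulmxN mulNmx => /oppr_inj.
Qed.

Lemma symplectic_linv (A : 'M[R]_(n + n)) : symplectic A ->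
  (J^T *m A^T *m J) *m A = 1%:M /\ A *m (J^T *m A^T *m J) = 1%:M /\
  symplectic (J^T *m A^T *m J).
Proof.
move=> hA.
have h1 : (J^T *m A^T *m J) *m A = 1%:M.
  by rewrite -!mulmxA (mulmxA A^T) hA JtJ.
split=> //; split; first exact: mulmx1C.
apply: symplecticM; last exact: symplecticJ.
apply: symplecticM; first exact: symplecticJt.
exact: symplectic_tr.
Qed.
End J.

Section Frob.
Variable R : realType.

Lemma trmxB' p q (A B : 'M[R]_(p, q)) : (A - B)^T = A^T - B^T.
Proof. by apply/matrixP => i j; rewrite !mxE. Qed.
Lemma trmxD' p q (A B : 'M[R]_(p, q)) : (A + B)^T = A^T + B^T.
Proof. by apply/matrixP => i j; rewrite !mxE. Qed.
Lemma trmxN' p q (A : 'M[R]_(p, q)) : (- A)^T = - A^T.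
Proof. by apply/matrixP => i j; rewrite !mxE. Qed.
Lemma trmxZ' p q a (A : 'M[R]_(p, q)) : (a *: A)^T = a *: A^T.
Proof. by apply/matrixP => i j; rewrite !mxE. Qed.

Lemma frob_ge0 p q (M : 'M[R]_(p, q)) : 0 <= \tr (M^T *m M).
Proof.
rewrite /mxtrace; apply: sumr_ge0 => i _; rewrite mxE.
by apply: sumr_ge0 => j _; rewrite mxE -expr2 sqr_ge0.
Qed.

Lemma frob_cs m r (A B : 'M[R]_(m, r)) (K : 'M[R]_(m, m)) :
  K^T *m K = 1%:M ->
  2 * \tr (A^T *m K *m B) <= \tr (A^T *m A) + \tr (B^T *m B).
Proof.
move=> hK.
have := frob_ge0 (A - K *m B).
rewrite trmxB' !mulmxBl !mulmxBr !mxtraceD !raddfN /=.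
rewrite trmx_mul !mulmxA mxtraceD raddfN /= -(mulmxA B^T K^T K) hK mulmx1.
have -> : \tr (B^T *m K^T *m A) = \tr (A^T *m K *m B).
  by rewrite -[LHS]mxtrace_tr !trmx_mul !trmxK mulmxA.
move=> h; rewrite -subr_ge0.
set a := \tr (A^T *m A) in h *; set b := \tr (B^T *m B) in h *.
set c := \tr (A^T *m K *m B) in h *.
lra.
Qed.

Lemma bessel N r (X : 'M[R]_N) (Z : 'M[R]_(N, r)) : Z^T *m Z = 1%:M ->
  \tr ((X *m Z)^T *m (X *m Z)) <= \tr (X^T *m X).
Proof.
move=> hZ.
set Q := 1%:M - Z *m Z^T.
have hQt : Q^T = Q by rewrite /Q trmxB' trmx1 trmx_mul trmxK.
have hQQ : Q *m Q^T = Q.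
  rewrite hQt /Q mulmxBl mul1mx mulmxBr mulmx1 !mulmxA -(mulmxA Z) hZ mulmx1.
  by rewrite subrr subr0.
have := frob_ge0 (X *m Q).
rewrite trmx_mul mulmxA mxtrace_mulC !mulmxA.
rewrite hQQ /Q !mulmxBl mul1mx mxtraceD raddfN /= subr_ge0 -!mulmxA mxtrace_mulC.
by rewrite trmx_mul !mulmxA.
Qed.
End Frob.

Section Core.
Variables (R : realType) (n : nat).
Local Notation J := (Jmx R n).

Lemma core (W P Q : 'M[R]_(n+n)) r (Y : 'M[R]_(n+n, r)) :
  symplectic W -> P^T = P -> P *m P = P -> J *m P = P *m J ->
  J *m Q = Q *m J -> Q *m Y = Y -> W *m Y = P *m W *m Y -> Y^T *m Y = 1%:M ->
  r%:R <= \tr ((P *m W *m Q)^T *m (P *m W *m Q)).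
Proof.
move=> hW hPt hPP hJP hJQ hQY hWY hY.
set X := P *m W *m Q.
have eA : X *m (J *m Y) = P *m W *m (J *m Y).
  by rewrite /X -!mulmxA (mulmxA Q) -hJQ -(mulmxA J) hQY.
have eB : X *m Y = P *m W *m Y by rewrite /X -!mulmxA hQY.
have e1 : Y^T *m Y = (X *m (J *m Y))^T *m J *m (X *m Y).
  rewrite eA eB -hWY !trmx_mul hPt.
  rewrite -!mulmxA.
  have -> : P *m (J *m (W *m Y)) = J *m (W *m Y).
    rewrite [in LHS]hWY mulmxA -hJP !mulmxA -(mulmxA J P P) hPP.
    by rewrite -!mulmxA (mulmxA P W Y) -hWY.
  rewrite !mulmxA -(mulmxA (Y^T *m J^T) W^T J) -(mulmxA (Y^T *m J^T) (W^T *m J) W) hW.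
  by rewrite -(mulmxA Y^T J^T J) JtJ mulmx1.
have hZ : (J *m Y)^T *m (J *m Y) = 1%:M.
  by rewrite trmx_mul mulmxA -(mulmxA Y^T) JtJ mulmx1.
have h1 := frob_cs (X *m (J *m Y)) (X *m Y) (JtJ R n).
have h2 := bessel X hZ.
have h3 := bessel X hY.
have hr : \tr ((X *m (J *m Y))^T *m J *m (X *m Y)) = r%:R.
  by rewrite -e1 hY mxtrace1.
rewrite hr in h1.
lra.
Qed.
End Core.

Section GS.
Variable R : realType.
Lemma trmxZ'' p q a (A : 'M[R]_(p, q)) : (a *: A)^T = a *: A^T.
Proof. by apply/matrixP => i j; rewrite !mxE. Qed.

Lemma unit_vec N (v : 'rV[R]_N) : v != 0 ->
  exists y : 'rV[R]_N, y *m y^T = 1%:M /\ (forall m (U : 'M[R]_(m, N)), (v <= U)%MS -> (y <= U)%MS)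
     /\ (forall p (Y : 'M[R]_(N, p)), v *m Y = 0 -> y *m Y = 0).
Proof.
move=> hv.
set s := (v *m v^T) 0 0.
have hs : 0 < s.
  have hs0 : 0 <= s.
    by rewrite /s mxE; apply: sumr_ge0 => j _; rewrite mxE -expr2 sqr_ge0.
  rewrite lt_def hs0 andbT; apply/negP => /eqP hs1.
  move/negP: hv; apply; apply/eqP/matrixP => i j; rewrite (ord1 i) mxE.
  have h0 : forall k : 'I_N, true -> 0 <= v 0 k * v^T k 0.
    by move=> k _; rewrite mxE -expr2 sqr_ge0.
  have h1 : \sum_(k | true) v 0 k * v^T k 0 = 0 by move: hs1; rewrite /s mxE.
  have := @psumr_eq0P _ _ _ _ h0 h1 j isT.
  rewrite /= mxE -expr2 => h; apply/eqP; rewrite -sqrf_eq0; apply/eqP; exact: h.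
exists ((Num.sqrt s)^-1 *: v); split; last split.
- rewrite trmxZ'' -scalemxAl -scalemxAr scalerA.
  apply/matrixP => i j; rewrite (ord1 i) (ord1 j) [in LHS]mxE -/s [in RHS]mxE eqxx mulr1n.
  have hq : 0 < Num.sqrt s by rewrite sqrtr_gt0.
  by rewrite -invfM -expr2 sqr_sqrtr ?ltW // mulVf ?gt_eqF.
- by move=> m U hU; apply: scalemx_sub.
- by move=> p Y hY; rewrite -scalemxAl hY scaler0.
Qed.

Lemma gram_schmidt N (U : 'M[R]_N) r : (r <= \rank U)%N ->
  exists Y : 'M[R]_(N, r), Y^T *m Y = 1%:M /\ (Y^T <= U)%MS.
Proof.
elim: r => [|r IH] hr.
  exists 0; split; first by apply/matrixP => [[]].
  by rewrite trmx0 sub0mx.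
have [Y [hY hYU]] := IH (ltnW hr).
set K := (U :&: kermx Y)%MS.
have hK : (0 < \rank K)%N.
  have := mxrank_sum_cap U (kermx Y).
  rewrite mxrank_ker.
  have h1 := rank_leq_col (U + kermx Y)%MS.
  have h2 := rank_leq_col Y.
  rewrite -/K; lia.
have : K != 0 by rewrite -mxrank_eq0 -lt0n.
have [i hi | hall] := pickP (fun i => row i K != 0).
  move=> _.
  have [y [hy [hyU hyY]]] := unit_vec hi.
  have hvK : (row i K <= K)%MS by exact: row_sub.
  have hvU : (row i K <= U)%MS by move: hvK; rewrite sub_capmx => /andP[].
  have hvY : row i K *m Y = 0 by apply/sub_kermxP; move: hvK; rewrite sub_capmx => /andP[].
  exists (row_mx y^T Y); split.
    change ((row_mx y^T Y)^T *m (row_mx y^T Y : 'M_(N, 1 + r)) = (1%:M : 'M_(1 + r))).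
    rewrite tr_row_mx trmxK mul_col_row hY hy (hyY _ _ hvY).
    have e : (y *m Y)^T = 0 by rewrite (hyY _ _ hvY) trmx0.
    rewrite trmx_mul in e; rewrite e.
    by rewrite -scalar_mx_block.
  change (((row_mx y^T Y : 'M_(N, 1 + r))^T <= U)%MS).
  by rewrite tr_row_mx trmxK col_mx_sub (hyU _ _ hvU) hYU.
move=> /eqP []; apply/row_matrixP => i; rewrite row0.
by move: (hall i) => /= /negbFE /eqP.
Qed.
End GS.

Section Dg.
Variables (R : realType) (n : nat).
Local Notation J := (Jmx R n).

Definition md (i : 'I_(n + n)) : 'I_n :=
  match @fintype.split n n i with inl a => a | inr b => b end.

Definition Dg (f : 'I_n -> R) : 'M[R]_(n + n) :=
  block_mx (diag_mx (\row_i f i)) 0 0 (diag_mx (\row_i f i)).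

Lemma Dg_diag f : Dg f = diag_mx (\row_i f (md i)).
Proof.
have -> : \row_i f (md i) = row_mx (\row_i f i) (\row_i f i).
  apply/rowP => i; rewrite !mxE /md.
  by case: (fintype.split i) => a; rewrite mxE.
by rewrite diag_mx_row.
Qed.

Lemma Dg_tr f : (Dg f)^T = Dg f.
Proof. by rewrite Dg_diag tr_diag_mx. Qed.

Lemma Dg_mul f g : Dg f *m Dg g = Dg (fun i => f i * g i).
Proof.
rewrite !Dg_diag mulmx_diag; congr diag_mx; apply/rowP => i; by rewrite !mxE.
Qed.

Lemma J_Dg f : J *m Dg f = Dg f *m J.
Proof.
rewrite /Dg /Jmx !mulmx_block.
rewrite !mulmx0 !mul0mx !addr0 !add0r !mulmx1 !mul1mx mulNmx mulmxN mulmx1 mul1mx.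
done.
Qed.

Lemma Dg_1B f : 1%:M - Dg f = Dg (fun i => 1 - f i).
Proof.
rewrite !Dg_diag -diag_const_mx.
apply/matrixP => i j; rewrite !mxE.
by case: (i == j); rewrite ?mulr1n ?mulr0n ?subr0.
Qed.

Lemma Dg_entry f (i j : 'I_(n + n)) : Dg f i j = f (md i) *+ (i == j).
Proof. by rewrite Dg_diag !mxE. Qed.

Lemma rank_diag m (d : 'rV[R]_m) : (\rank (diag_mx d) <= \sum_i (d ord0 i != 0%R))%N.
Proof.
rewrite diag_mx_sum_delta.
apply: (big_rec2 (fun a (M : 'M[R]_m) => (\rank M <= a)%N)).
  by rewrite mxrank0.
move=> i a M _ h.
apply: leq_trans (mxrank_add _ _) _; apply: leq_add => //.
have [->|nz] := eqP; first by rewrite scale0r mxrank0.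
by apply: leq_trans (mxrank_scale _ _) _; rewrite mxrank_delta.
Qed.

Lemma rank_Dg f : (\rank (Dg f) <= 2 * \sum_i (f i != 0%R))%N.
Proof.
rewrite /Dg rank_diag_block_mx.
have h := rank_diag (\row_i f i).
rewrite (eq_bigr (fun i => nat_of_bool (f i != 0%R))) in h; last by move=> i _; rewrite mxE.
rewrite mul2n -addnn; exact: (leq_add h h).
Qed.
End Dg.

Section F.
Variables (R : realType) (n : nat).
Local Notation J := (Jmx R n).

Definition ind (k : 'I_n) : 'I_n -> R := fun i => ((i <= k)%N)%:R.
Definition cnt (k l : 'I_n) : nat := (\sum_(t : 'I_n) ((t <= k) && (rev_ord t <= l)))%N.

Lemma count_bound (k l : 'I_n) :
  (0 < cnt k l)%N ->
  (cnt k l + \sum_(t : 'I_n) (l < rev_ord t) + \sum_(t : 'I_n) (k < t) <= n)%N.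
Proof.
move=> hc.
have : [exists t0 : 'I_n, ((t0 <= k) && (rev_ord t0 <= l))%N].
  apply/contraT; rewrite negb_exists => /forallP hall.
  move: hc; rewrite /cnt big1 //= => t _.
  by move: (hall t) => /negbTE ->.
move/existsP => [t0 /andP [h1 h2]].
rewrite /cnt -!big_split /=.
rewrite -[X in (_ <= X)%N]card_ord -sum1_card.
apply: leq_sum => t _.
move: h1 h2; rewrite /=.
have := ltn_ord t0; have := ltn_ord t.
case: (leqP t k) => h3; case: (leqP (n - t.+1) l) => h4 /=; lia.
Qed.

Lemma ind_idem k : (fun i => ind k i * ind k i) = ind k.
Proof. by apply: funext => i; rewrite /ind; case: (i <= k)%N; rewrite ?mulr1 ?mulr0. Qed.

Lemma ind_1B k : (fun i => 1 - ind k i) = (fun i => ((k < i)%N)%:R).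
Proof. by apply: funext => i; rewrite /ind ltnNge; case: (i <= k)%N; rewrite /= ?subrr ?subr0. Qed.

Lemma rank_1B (k : 'I_n) : (\rank (1%:M - Dg (ind k))%R <= 2 * \sum_(t : 'I_n) (k < t))%N.
Proof.
rewrite Dg_1B ind_1B; apply: leq_trans (rank_Dg _) _.
rewrite leq_mul2l; apply/orP; right; apply: leq_sum => i _.
by case: (k < i)%N; rewrite /= ?oner_eq0 ?eqxx.
Qed.

Lemma Fbound (W : 'M[R]_(n + n)) (k l : 'I_n) : symplectic W ->
  (2 * cnt k l)%:R <= \tr ((Dg (ind k) *m W *m Dg (ind l))^T *m (Dg (ind k) *m W *m Dg (ind l))).
Proof.
move=> hW.
set P := Dg (ind k); set Q := Dg (ind l).
set U := (kermx (1%:M - Q) :&: kermx (W^T *m (1%:M - P)))%MS.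
have hrU : (2 * cnt k l <= \rank U)%N.
  have [c0|cpos] := posnP (cnt k l); first by rewrite c0.
  have hcb := count_bound cpos.
  have eB : (\sum_(t : 'I_n) (l < t) = \sum_(t : 'I_n) (l < rev_ord t))%N.
    by rewrite (reindex_inj rev_ord_inj).
  have h1 := rank_1B l. have h2 := rank_1B k.
  have h3 := mxrankM_maxr W^T (1%:M - P).
  have := mxrank_sum_cap (kermx (1%:M - Q)) (kermx (W^T *m (1%:M - P))).
  rewrite !mxrank_ker -/U.
  have h4 := rank_leq_col (kermx (1%:M - Q) + kermx (W^T *m (1%:M - P)))%MS.
  rewrite -/Q in h1; rewrite -/P in h2. move: (\rank U : nat) (\rank (1%:M - Q)%R : nat) (\rank (1%:M - P)%R : nat) (\rank (W^T *m (1%:M - P)) : nat) (\rank (kermx (1%:M - Q) + kermx (W^T *m (1%:M - P)))%MS : nat) h1 h2 h3 h4 hcb eB. move: (cnt k l) cpos. move: (\sum_(t < n) (l < t))%N (\sum_(t < n) (k < t))%N (\sum_(t < n) (l < rev_ord t))%N. lia.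
have [Y [hY hYU]] := gram_schmidt hrU.
have hY1 : Y^T *m (1%:M - Q) = 0.
  by apply/sub_kermxP; move: hYU; rewrite sub_capmx => /andP[].
have hY2 : Y^T *m (W^T *m (1%:M - P)) = 0.
  by apply/sub_kermxP; move: hYU; rewrite sub_capmx => /andP[].
have hQY : Q *m Y = Y.
  have := congr1 trmx hY1; rewrite trmx_mul trmxK trmxB' trmx1 Dg_tr trmx0.
  by rewrite mulmxBl mul1mx => /eqP; rewrite subr_eq0 => /eqP.
have hWY : W *m Y = P *m W *m Y.
  have := congr1 trmx hY2; rewrite !trmx_mul !trmxK trmxB' trmx1 Dg_tr trmx0.
  by rewrite -/P !mulmxBl !mul1mx => /eqP; rewrite subr_eq0 => /eqP ->.
apply: (core hW _ _ _ _ hQY hWY hY).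
- exact: Dg_tr.
- by rewrite /P Dg_mul ind_idem.
- exact: J_Dg.
- exact: J_Dg.
Qed.
End F.

Section Sums.
Variable R : realType.

Lemma sum4 (I K : finType) (a b : K -> R) (u v : K -> I -> R) (w : I -> I -> R) :
  \sum_i \sum_j (\sum_k a k * u k i) * w i j * (\sum_l b l * v l j)
  = \sum_k \sum_l a k * b l * (\sum_i \sum_j u k i * w i j * v l j).
Proof.
have e1 : forall k l, a k * b l * (\sum_i \sum_j u k i * w i j * v l j)
   = \sum_i \sum_j a k * b l * (u k i * w i j * v l j).
  move=> k l; rewrite mulr_sumr; apply: eq_bigr => i _; by rewrite mulr_sumr.
under [RHS]eq_bigr => k _ do under eq_bigr => l _ do rewrite e1.
under [RHS]eq_bigr => k _ do rewrite exchange_big.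
under [RHS]eq_bigr => k _ do under eq_bigr => i _ do rewrite exchange_big.
rewrite [RHS]exchange_big.
under [RHS]eq_bigr => i _ do rewrite exchange_big.
apply: eq_bigr => i _; apply: eq_bigr => j _.
rewrite mulr_suml mulr_suml; apply: eq_bigr => k _.
rewrite mulr_sumr; apply: eq_bigr => l _.
ring.
Qed.

Variable n : nat.

Lemma trace_formula (W : 'M[R]_(n + n)) (f g : 'I_n -> R) :
  \tr (W *m Dg f *m W^T *m Dg g)
  = \sum_i \sum_j g (md i) * W i j ^+ 2 * (f (md j)).
Proof.
rewrite -mulmxA !Dg_diag !mul_mx_diag /mxtrace.
apply: eq_bigr => i _; rewrite mxE; apply: eq_bigr => j _; rewrite !mxE.
ring.
Qed.

Definition xx (x : 'I_n -> R) (m : nat) : R := \sum_(i : 'I_n | val i == m) x i.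
Definition cf (x : 'I_n -> R) (l : 'I_n) : R := xx x l - xx x l.+1.

Lemma xxE (x : 'I_n -> R) (i : 'I_n) : xx x i = x i.
Proof. by rewrite /xx (big_pred1 i) // => j /=; rewrite val_eqE. Qed.

Lemma xx_ge (x : 'I_n -> R) m : (n <= m)%N -> xx x m = 0.
Proof.
move=> h; rewrite /xx big_pred0 // => j /=; apply/negbTE.
by rewrite neq_ltn (leq_trans (ltn_ord j) h).
Qed.

Lemma abel (x : 'I_n -> R) (i : 'I_n) : x i = \sum_(l : 'I_n) cf x l * ind R l i.
Proof.
rewrite /cf /ind.
rewrite -(big_mkord xpredT (fun l => (xx x l - xx x l.+1) * ((i <= l)%N)%:R)).
rewrite (big_cat_nat _ (n := i)) //= ?(ltnW (ltn_ord i)) //.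
rewrite big_nat_cond big1 ?add0r; last first.
  by move=> l /andP [/andP [_ h] _]; rewrite leqNgt h mulr0.
rewrite big_nat_cond.
under eq_bigr => l /andP [/andP [h _] _] do rewrite h mulr1.
rewrite -big_nat_cond.
have := telescope_sumr (fun m => xx x m) (ltnW (ltn_ord i)).
rewrite xx_ge // xxE sub0r => h.
rewrite -[LHS]opprK -h -sumrN; apply: eq_bigr => l _; by rewrite opprB.
Qed.

Lemma cf_ge0 (x : 'I_n -> R) : (forall i j : 'I_n, (i <= j)%N -> x j <= x i) ->
  (forall i, 0 < x i) -> forall l, 0 <= cf x l.
Proof.
move=> hmon hpos l; rewrite /cf subr_ge0 xxE.
have [hl|hl] := ltnP l.+1 n.
  have -> : l.+1 = val (Ordinal hl) by [].
  by rewrite xxE; apply: hmon => /=.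
by rewrite xx_ge // ltW.
Qed.

Lemma sum3 (I K : finType) (a b : K -> R) (u v : K -> I -> R) :
  \sum_t (\sum_k a k * u k t) * (\sum_l b l * v l t)
  = \sum_k \sum_l a k * b l * (\sum_t u k t * v l t).
Proof.
under [RHS]eq_bigr => k _ do under eq_bigr => l _ do rewrite mulr_sumr.
under [RHS]eq_bigr => k _ do rewrite exchange_big.
rewrite [RHS]exchange_big.
apply: eq_bigr => t _.
rewrite mulr_suml; apply: eq_bigr => k _.
rewrite mulr_sumr; apply: eq_bigr => l _.
ring.
Qed.

Lemma F_formula (W : 'M[R]_(n + n)) (k l : 'I_n) :
  \tr ((Dg (ind R k) *m W *m Dg (ind R l))^T *m (Dg (ind R k) *m W *m Dg (ind R l)))
  = \sum_i \sum_j ind R k (md i) * W i j ^+ 2 * ind R l (md j).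
Proof.
rewrite -trace_formula mxtrace_mulC !trmx_mul !Dg_tr.
set P := Dg (ind R k); set Q := Dg (ind R l).
have hP : P *m P = P by rewrite /P Dg_mul ind_idem.
have hQ : Q *m Q = Q by rewrite /Q Dg_mul ind_idem.
rewrite !mulmxA mxtrace_mulC !mulmxA hP -(mulmxA (P *m W) Q Q) hQ -!mulmxA mxtrace_mulC !mulmxA.
done.
Qed.

Lemma lower (W : 'M[R]_(n + n)) (d e : 'I_n -> R) : symplectic W ->
  (forall i j : 'I_n, (i <= j)%N -> d j <= d i) -> (forall i, 0 < d i) ->
  (forall i j : 'I_n, (i <= j)%N -> e j <= e i) -> (forall i, 0 < e i) ->
  2 * \sum_i e i * d (rev_ord i) <= \tr (W *m Dg d *m W^T *m Dg e).
Proof.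
move=> hW hdm hdp hem hep.
rewrite trace_formula.
have eR : \sum_i \sum_j e (md i) * W i j ^+ 2 * d (md j)
  = \sum_k \sum_l cf e k * cf d l *
     (\sum_i \sum_j ind R k (md i) * W i j ^+ 2 * ind R l (md j)).
  rewrite -(sum4 (cf e) (cf d) (fun k i => ind R k (md i)) (fun l j => ind R l (md j))
   (fun i j => W i j ^+ 2)).
  by apply: eq_bigr => i _; apply: eq_bigr => j _; rewrite -!abel.
have eL : \sum_i e i * d (rev_ord i)
  = \sum_k \sum_l cf e k * cf d l * (\sum_t ind R k t * ind R l (rev_ord t)).
  rewrite -(sum3 (cf e) (cf d) (fun k t => ind R k t) (fun l t => ind R l (rev_ord t))).
  by apply: eq_bigr => t _; rewrite -!abel.
rewrite eR eL.
rewrite mulr_sumr; apply: ler_sum => k _.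
rewrite mulr_sumr; apply: ler_sum => l _.
rewrite -F_formula.
have h := Fbound k l hW.
have hc : 0 <= cf e k * cf d l by apply: mulr_ge0; apply: cf_ge0.
rewrite mulrCA; apply: ler_wpM2l => //.
apply: le_trans h; rewrite natrM /cnt natr_sum; rewrite le_eqVlt; apply/orP; left; apply/eqP; congr (_ * _).
apply: eq_bigr => t _; rewrite /ind.
by case: (t <= k)%N; case: (rev_ord t <= l)%N; rewrite /= ?mulr1 ?mulr0.
Qed.
End Sums.

Section Final.
Variables (R : realType) (n : nat).
Local Notation J := (Jmx R n).

Lemma reduce (V H SV SH W : 'M[R]_(n + n)) (dV dH : 'I_n -> R) :
  SV^T *m V *m SV = Dg dV -> SH^T *m H *m SH = Dg dH ->
  \tr ((SH *m W *m SV^T) *m V *m (SH *m W *m SV^T)^T *m H)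
  = \tr (W *m Dg dV *m W^T *m Dg dH).
Proof.
move=> eV eH.
rewrite !trmx_mul trmxK.
rewrite -!mulmxA mxtrace_mulC !mulmxA.
rewrite -(mulmxA (W *m SV^T) V SV) -(mulmxA W SV^T (V *m SV)) (mulmxA SV^T V SV) eV.
rewrite -!mulmxA (mulmxA SH^T H SH) eH.
by rewrite !mulmxA.
Qed.

Definition Pr : 'M[R]_n := \matrix_(i, j) ((i == rev_ord j)%:R).

Lemma PrtPr : Pr^T *m Pr = 1%:M.
Proof.
apply/matrixP => i j; rewrite !mxE.
rewrite (bigD1 (rev_ord i)) //= big1 ?addr0.
  rewrite !mxE eqxx mul1r.
  have -> : (rev_ord i == rev_ord j) = (i == j) by apply/eqP/eqP => [/rev_ord_inj|->].
  by case: (i == j).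
by move=> a ha; rewrite !mxE (negbTE ha) mul0r.
Qed.

Definition W0 : 'M[R]_(n + n) := block_mx Pr 0 0 Pr.

Lemma W0_symp : symplectic W0.
Proof.
rewrite /symplectic /W0 /Jmx tr_block_mx !trmx0 !mulmx_block.
rewrite ?mulmx0 ?mul0mx ?addr0 ?add0r ?oppr0 ?mulmx0 ?mul0mx ?addr0 ?add0r.
by rewrite mulmx1 mulmxN mulmx1 mulNmx PrtPr.
Qed.

Lemma tr_n (A : 'M[R]_n) (f g : 'rV[R]_n) :
  \tr (A *m diag_mx f *m A^T *m diag_mx g) = \sum_i \sum_j g 0 i * A i j ^+ 2 * f 0 j.
Proof.
rewrite -mulmxA !mul_mx_diag /mxtrace.
apply: eq_bigr => i _; rewrite mxE; apply: eq_bigr => j _; rewrite !mxE.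
ring.
Qed.

Lemma W0_trace (d e : 'I_n -> R) :
  \tr (W0 *m Dg d *m W0^T *m Dg e) = 2 * \sum_i e i * d (rev_ord i).
Proof.
rewrite /W0 /Dg tr_block_mx !trmx0 !mulmx_block.
rewrite ?mulmx0 ?mul0mx ?addr0 ?add0r ?mulmx0 ?mul0mx ?addr0 ?add0r.
rewrite mxtrace_block tr_n mulr2n mulrDl mul1r; congr (_ + _);
apply: eq_bigr => i _; rewrite (bigD1 (rev_ord i)) //= big1 ?addr0.
- by rewrite !mxE rev_ordK eqxx expr1n mulr1.
- by move=> j hj; rewrite !mxE (_ : (i == rev_ord j) = false) ?expr0n ?mulr0 ?mul0r //;
    apply/negbTE; apply: contra hj => /eqP ->; rewrite rev_ordK.
- by rewrite !mxE rev_ordK eqxx expr1n mulr1.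
- by move=> j hj; rewrite !mxE (_ : (i == rev_ord j) = false) ?expr0n ?mulr0 ?mul0r //;
    apply/negbTE; apply: contra hj => /eqP ->; rewrite rev_ordK.
Qed.
End Final.

Unset Implicit Arguments.

Theorem theorem1 (R : realType) (n : nat) (hn : (0 < n)%N)
    (V H : 'M[R]_(n + n)) (dV dH : 'I_n -> R) :
  sym_posdef V -> sym_posdef H ->
  symp_eigs V dV -> symp_eigs H dH ->
  inf [set t : R | exists S : 'M[R]_(n + n),
                     symplectic S /\ t = \tr (S *m V *m S^T *m H)]
  = 2 * \sum_(i < n) dH i * dV (rev_ord i).
Proof.
move=> _ _ [hVm [hVp [SV [hSV eV]]]] [hHm [hHp [SH [hSH eH]]]].
set E := [set t : R | _].
set v := 2 * _.
have eV' : SV^T *m V *m SV = Dg dV by [].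
have eH' : SH^T *m H *m SH = Dg dH by [].
have hvE : E v.
  exists (SH *m W0 R n *m SV^T); split.
    apply: symplecticM; first exact: symplecticM hSH (W0_symp R n).
    exact: symplectic_tr.
  by rewrite (reduce _ eV' eH') W0_trace.
have hlb : lbound E v.
  move=> t [S [hS ->]].
  have [hLH1 [hLH2 hLHs]] := symplectic_linv hSH.
  have [hLV1 [hLV2 hLVs]] := symplectic_linv hSV.
  set LH := _ *m SH^T *m _ in hLH1 hLH2 hLHs.
  set LV := _ *m SV^T *m _ in hLV1 hLV2 hLVs.
  have eS : S = SH *m (LH *m S *m LV^T) *m SV^T.
    have e1 : SH *m (LH *m S *m LV^T) = S *m LV^T by rewrite mulmxA mulmxA hLH2 mul1mx.
    by rewrite e1 -mulmxA -trmx_mul hLV2 trmx1 mulmx1.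
  rewrite eS (reduce _ eV' eH').
  apply: lower => //.
  apply: symplecticM; first exact: symplecticM hLHs hS.
  exact: symplectic_tr.
apply/eqP; rewrite eq_le; apply/andP; split.
  by apply: ge_inf => //; exists v.
by apply: lb_le_inf => //; exists v.
Qed.
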